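(* Let $(\mathfrak g,\mathfrak l,\tau)$ be a pseudo-symmetric triple whose decorated Dynkin diagram violates the selection rules. Then $\tau$ restricts to the identity on $D_0$.
   Context: Setting and notation as follows. $\mathfrak g$ is one of $\mathfrak{gl}(N|2\mathbf m)$, $\mathfrak{osp}(2\mathbf n+1|2\mathbf m)$, $\mathfrak{osp}(2\mathbf n|2\mathbf m)$, $\mathfrak{spo}(2\mathbf n|2\mathbf m)$ with natural module $V=\mathbb C^{N|2\mathbf m}$, homogeneous weight basis $v_i$ of weights $\zeta_i$, $|v_i|=1$ iff $i\le\mathbf m$ or $i>\mathbf m+N$; standard form $(\varepsilon_i,\varepsilon_j)=\delta_{ij}=-(\delta_i,\delta_j)$, $(\varepsilon_i,\delta_j)=0$; standard simple roots $\Pi=\{\alpha_1,\dots,\alpha_n\}$ in the order $\delta_1-\delta_2,\dots,\delta_{\mathbf m}-\varepsilon_1,\varepsilon_1-\varepsilon_2,\dots$ followed for $\mathfrak{gl}$ by $\varepsilon_N-\delta_{\mathbf m+1},\dots,\delta_{2\mathbf m-1}-\delta_{2\mathbf m}$ and for the ortho-symplectic cases ending with the tail root $\varepsilon_{\mathbf n}$, resp. $\varepsilon_{\mathbf n-1}+\varepsilon_{\mathbf n}$ (for $\mathbf n=1$: $\delta_{\mathbf m}\pm\varepsilon_1$), resp. $2\varepsilon_{\mathbf n}$; adjacency = nonzero inner product. Levi data, $w_{\mathfrak l}$, admissibility and pseudo-symmetric triples: $\mathfrak l$ generated by $e_{\pm\alpha}$, $\alpha\in\Pi_{\mathfrak l}$;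 each component $\mathfrak l_i$ acts naturally on the span of $v_{j_1},..,v_{j_r}$ ($j_1<..<j_r$); $w_{\mathfrak l_i}:\zeta_{j_s}\mapsto\zeta_{j_{r+1-s}}$ fixing other $\zeta_j$, $w_{\mathfrak l}=\prod w_{\mathfrak l_i}$; admissible = induced grading on each such span symmetric with minimal number of odd simple roots of its $\mathfrak{gl}$-extension (type A) or of $\mathfrak l_i$; $\tau$ an even Dynkin diagram automorphism of $\Pi$ equal to $-w_{\mathfrak l}$ on $\Pi_{\mathfrak l}$ with, for $\tilde\mu=w_{\mathfrak l}\tau(\mu)$, $(\mu+\tilde\mu,\alpha)=0$, $(\mu+\tilde\mu,\nu-\tilde\nu)=0$ ($\mu,\nu\in\bar\Pi_{\mathfrak l}=\Pi\setminus\Pi_{\mathfrak l}$, $\alpha\in\Pi_{\mathfrak l}$). $D_0\subset\Pi$ is obtained by removing the two last simple roots $\alpha_{n-1},\alpha_n$ if $\mathfrak g=\mathfrak{osp}(2\mathbf n|2\mathbf m)$ (including $\mathbf n=1$), the last root $\alpha_n$ if $\mathfrak g=\mathfrak{osp}(2\mathbf n+1|2\mathbf m)$ or $\mathfrak{spo}(2\mathbf n|2\mathbf m)$, and $D_0=\Pi$ for $\mathfrak{gl}$. The decorated diagram violates the selection rules if one of the following configurations occurs (orientation arbitrary): (F1) $\beta\in\bar\Pi_{\mathfrak l}$, $\alpha\in\Pi_{\mathfrak l}$ both even, $\tau(\beta)=\beta$, $(\alpha,\beta)\ne0$, $\{\alpha\}$ a connected component of $\Pi_{\mathfrak l}$ and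 the only element of $\Pi_{\mathfrak l}$ adjacent to $\beta$; (F2) $\alpha,\beta\in\bar\Pi_{\mathfrak l}$, $\beta$ odd with $(\beta,\beta)=0$, $\tau(\beta)=\beta$, $\beta$ not adjacent to $\Pi_{\mathfrak l}$, $(\alpha,\beta)\ne0$; (F3) $\alpha,\gamma\in\Pi_{\mathfrak l}$ even, $\beta\in\bar\Pi_{\mathfrak l}$ odd, $\sigma\in\bar\Pi_{\mathfrak l}$ even, $(\alpha,\beta),(\beta,\gamma),(\gamma,\sigma)\ne0$, $(\alpha,\gamma)=(\alpha,\sigma)=(\beta,\sigma)=0$, $\{\alpha\},\{\gamma\}$ components of $\Pi_{\mathfrak l}$ and the only elements of $\Pi_{\mathfrak l}$ adjacent to $\beta$, $\tau(\beta)=\beta$, $\tau(\sigma)=\sigma$; (F4) $\mathfrak g=\mathfrak{osp}(2\mathbf n|2\mathbf m)$, $\beta=\delta_{\mathbf m}-\varepsilon_1\in\bar\Pi_{\mathfrak l}$ with $\tau(\beta)=\beta$ and either (a) $\beta=\alpha_{n-3}$, $\alpha_{n-4},\alpha_{n-2}\in\Pi_{\mathfrak l}$ forming singleton components, $\alpha_{n-1},\alpha_n\in\bar\Pi_{\mathfrak l}$ swapped by $\tau$, or (b) $\beta=\alpha_{n-2}$, $\alpha_{n-3}\in\Pi_{\mathfrak l}$, exactly one tail root $\gamma\in\{\alpha_{n-1},\alpha_n\}$ in $\Pi_{\mathfrak l}$, $\{\alpha_{n-3}\},\{\gamma\}$ singleton components, and the other tail root fixed by $\tau$. *)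

(* Defs.v *)
From HB Require Import structures.
From mathcomp Require Import all_boot all_order all_algebra.
Set Implicit Arguments. Unset Strict Implicit. Unset Printing Implicit Defensive.
Import GRing.Theory Num.Theory.

Inductive sakind := GL | OSPodd | OSPeven | SPO.

(* sa_n = N for gl(N|2m), = bold n otherwise; sa_m = bold m *)
Record superalg := SuperAlg { sa_kind : sakind; sa_n : nat; sa_m : nat }.

Definition dimV (g : superalg) : nat :=
  match sa_kind g with
  | GL => sa_n g + 2 * sa_m g
  | OSPodd => (2 * sa_n g).+1 + 2 * sa_m g
  | _ => 2 * sa_n g + 2 * sa_m g
  end.

Definition Neven (g : superalg) : nat := dimV g - 2 * sa_m g.

Definition rk (g : superalg) : nat :=
  match sa_kind g with GL => (dimV g).-1 | _ => sa_m g + sa_n g end.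

(* number of coordinates (delta_i, eps_j) of the weight lattice *)
Definition ncoord (g : superalg) : nat :=
  match sa_kind g with GL => dimV g | _ => sa_m g + sa_n g end.

Definition is_gl (g : superalg) : bool := if sa_kind g is GL then true else false.

(* parity of v_j (indices 1..dimV) *)
Definition vodd (g : superalg) (j : nat) : bool :=
  (j <= sa_m g) || (sa_m g + Neven g < j).

(* weights: integer coordinate vectors; coordinate c (0-based) is the
   coefficient of the weight of v_(c+1) (a delta or an eps). *)
Definition weight := nat -> int.
Definition wadd (x y : weight) : weight := fun c => (x c + y c)%R.
Definition wopp (x : weight) : weight := fun c => (- x c)%R.
Definition wsub (x y : weight) : weight := fun c => (x c - y c)%R.
Definition ebasis (c : nat) : weight := fun c' => if c' == c then 1%R else 0%R.
Definition weq (g : superalg) (x y : weight) : Prop :=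
  forall c, c < ncoord g -> x c = y c.

(* zeta_j, the weight of v_j *)
Definition zeta (g : superalg) (j : nat) : weight :=
  if j <= ncoord g then ebasis j.-1
  else if dimV g + 1 == 2 * j then (fun _ => 0%R)
  else wopp (ebasis (dimV g - j)).

(* the standard form: (eps_i,eps_j) = delta_ij = -(delta_i,delta_j) *)
Definition ip (g : superalg) (x y : weight) : int :=
  (\sum_(c < ncoord g) (if vodd g c.+1 then -1 else 1) * x c * y c)%R.

(* simple root alpha_k = zeta_a - zeta_b with (a,b) = apair g k *)
Definition apair (g : superalg) (k : nat) : nat * nat :=
  match sa_kind g with
  | OSPeven => if k == rk g then (k.-1, k.+1) else (k, k.+1)
  | _ => (k, k.+1)
  end.

Definition alpha (g : superalg) (k : nat) : weight :=
  wsub (zeta g (apair g k).1) (zeta g (apair g k).2).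

(* parity of alpha_k (true = odd) *)
Definition rpar (g : superalg) (k : nat) : bool :=
  vodd g (apair g k).1 (+) vodd g (apair g k).2.

Definition inR (g : superalg) (k : nat) : bool := (1 <= k <= rk g).
(* Pi_l is given by a predicate L on indices; Pi_l = {alpha_k | inL k} *)
Definition inL (g : superalg) (L : nat -> bool) (k : nat) : bool := inR g k && L k.
Definition inLbar (g : superalg) (L : nat -> bool) (k : nat) : bool := inR g k && ~~ L k.

Definition adj (g : superalg) (i j : nat) : bool :=
  (i != j) && (ip g (alpha g i) (alpha g j) != 0%R).

Fixpoint reach (e : nat -> nat -> bool) (dom : seq nat) (n i j : nat) : bool :=
  if n is n'.+1 then (i == j) || has (fun k => e i k && reach e dom n' k j) dom
  else i == j.

(* i and j lie in the same connected component of Pi_l *)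
Definition sameC (g : superalg) (L : nat -> bool) (i j : nat) : bool :=
  inL g L i && inL g L j &&
  reach (adj g) [seq k <- iota 1 (rk g) | L k] (rk g) i j.

(* the component of i contains the tail (is of ortho-symplectic type) *)
Definition compTail (g : superalg) (L : nat -> bool) (i : nat) : bool :=
  match sa_kind g with
  | GL => false
  | OSPeven => sameC g L i (rk g).-1 && sameC g L i (rk g)
  | _ => sameC g L i (rk g)
  end.

(* v_j belongs to the span on which the component of i acts naturally *)
Definition inspan (g : superalg) (L : nat -> bool) (i j : nat) : bool :=
  if compTail g L i then
    has (fun k => sameC g L i k && (k <= j <= dimV g + 1 - k)) (iota 1 (rk g))
  else
    has (fun k => sameC g L i k && ((j == (apair g k).1) || (j == (apair g k).2)))
        (iota 1 (rk g)).

Definition spanseq (g : superalg) (L : nat -> bool) (i : nat) : seq nat :=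
  [seq j <- iota 1 (dimV g) | inspan g L i j].

Definition span_rev (g : superalg) (L : nat -> bool) (i j : nat) : nat :=
  nth 0 (rev (spanseq g L i)) (index j (spanseq g L i)).

Definition dualidx (g : superalg) (j : nat) : nat := dimV g + 1 - j.

(* image of zeta_j under w_{l_i} (linear extension of zeta_{j_s} |-> zeta_{j_{r+1-s}}) *)
Definition wimg (g : superalg) (L : nat -> bool) (i j : nat) : weight :=
  if inspan g L i j then zeta g (span_rev g L i j)
  else if ~~ is_gl g && inspan g L i (dualidx g j)
  then wopp (zeta g (span_rev g L i (dualidx g j)))
  else zeta g j.

Definition wcomp (g : superalg) (L : nat -> bool) (i : nat) (x : weight) : weight :=
  fun c => (\sum_(c' < ncoord g) x c' * wimg g L i c'.+1 c)%R.

Definition isrep (g : superalg) (L : nat -> bool) (i : nat) : bool :=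
  inL g L i && ~~ has (sameC g L i) (iota 1 i.-1).

(* w_l = product of the w_{l_i} over the components *)
Definition wL (g : superalg) (L : nat -> bool) (x : weight) : weight :=
  foldr (fun i y => if isrep g L i then wcomp g L i y else y) x (iota 1 (rk g)).

(* number of odd simple roots in a parity sequence (of the span) *)
Definition changes (q : seq bool) : nat :=
  count (fun ab : bool * bool => ab.1 != ab.2) (zip q (behead q)).

(* number of odd simple roots of the Dynkin diagram of l_i (resp. of the gl
   extension) determined by the symmetric parity sequence q of its span *)
Definition oddcnt (g : superalg) (L : nat -> bool) (i : nat) (q : seq bool) : nat :=
  if ~~ compTail g L i then changes q else
  match sa_kind g with
  | GL => changes q
  | OSPodd => changes (take (size q).+1./2 q)
  | _ => let h := (size q)./2 in let hq := take h q in
         changes hq +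
         nat_of_bool ((last false hq == (if sa_kind g is SPO then true else false))
                      && (nth false hq (h - 2) != nth false hq h.-1))
  end.

Definition adm_comp (g : superalg) (L : nat -> bool) (i : nat) : Prop :=
  let p := [seq vodd g j | j <- spanseq g L i] in
  p = rev p /\
  forall q : seq bool, perm_eq q p -> q = rev q -> oddcnt g L i p <= oddcnt g L i q.

Definition admissible (g : superalg) (L : nat -> bool) : Prop :=
  forall i, isrep g L i -> adm_comp g L i.

Definition even_diag_aut (g : superalg) (tau : nat -> nat) : Prop :=
  (forall k, inR g k -> inR g (tau k)) /\
  (forall i j, inR g i -> inR g j -> tau i = tau j -> i = j) /\
  (forall i j, inR g i -> inR g j ->
     ip g (alpha g (tau i)) (alpha g (tau j)) = ip g (alpha g i) (alpha g j)) /\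
  (forall k, inR g k -> rpar g (tau k) = rpar g k).

Definition tilde (g : superalg) (L : nat -> bool) (tau : nat -> nat) (k : nat) : weight :=
  wL g L (alpha g (tau k)).

Definition pseudo_symmetric (g : superalg) (L : nat -> bool) (tau : nat -> nat) : Prop :=
  admissible g L /\ even_diag_aut g tau /\
  (forall k, inL g L k -> weq g (alpha g (tau k)) (wopp (wL g L (alpha g k)))) /\
  (forall mu a, inLbar g L mu -> inL g L a ->
     ip g (wadd (alpha g mu) (tilde g L tau mu)) (alpha g a) = 0%R) /\
  (forall mu nu, inLbar g L mu -> inLbar g L nu ->
     ip g (wadd (alpha g mu) (tilde g L tau mu))
          (wsub (alpha g nu) (tilde g L tau nu)) = 0%R).

Definition singleton (g : superalg) (L : nat -> bool) (a : nat) : Prop :=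
  inL g L a /\ forall k, inL g L k -> ~~ adj g a k.

Definition F1 (g : superalg) (L : nat -> bool) (tau : nat -> nat) : Prop :=
  exists b a, inLbar g L b /\ inL g L a /\ ~~ rpar g b /\ ~~ rpar g a /\
    tau b = b /\ ip g (alpha g a) (alpha g b) != 0%R /\ singleton g L a /\
    (forall k, inL g L k -> adj g b k -> k = a).

Definition F2 (g : superalg) (L : nat -> bool) (tau : nat -> nat) : Prop :=
  exists a b, inLbar g L a /\ inLbar g L b /\ rpar g b /\
    ip g (alpha g b) (alpha g b) = 0%R /\ tau b = b /\
    (forall k, inL g L k -> ~~ adj g b k) /\
    ip g (alpha g a) (alpha g b) != 0%R.

(* alpha = a, beta = b, gamma = c, sigma = s *)
Definition F3 (g : superalg) (L : nat -> bool) (tau : nat -> nat) : Prop :=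
  exists a b c s,
    inL g L a /\ inL g L c /\ ~~ rpar g a /\ ~~ rpar g c /\
    inLbar g L b /\ rpar g b /\ inLbar g L s /\ ~~ rpar g s /\
    ip g (alpha g a) (alpha g b) != 0%R /\ ip g (alpha g b) (alpha g c) != 0%R /\
    ip g (alpha g c) (alpha g s) != 0%R /\ ip g (alpha g a) (alpha g c) = 0%R /\
    ip g (alpha g a) (alpha g s) = 0%R /\ ip g (alpha g b) (alpha g s) = 0%R /\
    singleton g L a /\ singleton g L c /\
    (forall k, inL g L k -> adj g b k -> k = a \/ k = c) /\
    tau b = b /\ tau s = s.

Definition F4 (g : superalg) (L : nat -> bool) (tau : nat -> nat) : Prop :=
  let r := rk g in let b := sa_m g in   (* alpha_b = delta_m - eps_1 *)
  (sa_kind g = OSPeven /\ inLbar g L b /\ tau b = b) /\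
  (
    (b = r - 3 /\ singleton g L (r - 4) /\ singleton g L (r - 2) /\
     inLbar g L r.-1 /\ inLbar g L r /\ tau r.-1 = r /\ tau r = r.-1)
  \/
    (b = r - 2 /\ inL g L (r - 3) /\
     exists c d, ((c = r.-1 /\ d = r) \/ (c = r /\ d = r.-1)) /\
       inL g L c /\ inLbar g L d /\ singleton g L (r - 3) /\ singleton g L c /\
       tau d = d)).

Definition violates_selection_rules (g : superalg) (L : nat -> bool)
  (tau : nat -> nat) : Prop :=
  F1 g L tau \/ F2 g L tau \/ F3 g L tau \/ F4 g L tau.

(* D_0 (as a set of indices of simple roots) *)
Definition inD0 (g : superalg) (k : nat) : bool :=
  match sa_kind g with
  | GL => 1 <= k <= rk g
  | OSPeven => 1 <= k <= rk g - 2
  | _ => 1 <= k <= rk g - 1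
  end.

(* Main.v *)
Require Import Defs.
From mathcomp Require Import all_boot all_order all_algebra.
From mathcomp Require Import zify ring lra.
Set Implicit Arguments. Unset Strict Implicit. Unset Printing Implicit Defensive.
Import GRing.Theory Num.Theory.

Section Sums.
Local Open Scope ring_scope.

Lemma sum1 n (F : nat -> int) p : (p < n)%N ->
  (forall c, (c < n)%N -> c != p -> F c = 0) -> \sum_(c < n) F c = F p.
Proof.
move=> Hp H; rewrite (bigD1 (Ordinal Hp)) //= big1 ?addr0 // => i Hi.
apply: H => //; apply: contra Hi => /eqP Hip; apply/eqP/val_inj => /=; exact: Hip.
Qed.

Lemma sum2 n (F : nat -> int) p q : (p < n)%N -> (q < n)%N -> p != q ->
  (forall c, (c < n)%N -> c != p -> c != q -> F c = 0) -> \sum_(c < n) F c = F p + F q.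
Proof.
move=> Hp Hq Hpq H; rewrite (bigD1 (Ordinal Hp)) //= (bigD1 (Ordinal Hq)) /=; last first.
  by apply: contra Hpq => /eqP [->].
rewrite big1 ?addr0 // => i /andP [Hi1 Hi2].
apply: H => //.

Qed.
End Sums.

Section Basic.
Local Open Scope ring_scope.
Variable g : superalg.
Hypothesis hm : (1 <= sa_m g)%N.
Hypothesis hn : (1 <= sa_n g)%N.

Definition sg (c : nat) : int := if vodd g c.+1 then -1 else 1.

Lemma nc_rk : ncoord g = if is_gl g then (rk g).+1 else rk g.
Proof.
move: hm hn; rewrite /ncoord /rk /is_gl /dimV; case: (sa_kind g) => // *. lia.
Qed.

Lemma apair_gen k : (k < ncoord g)%N -> apair g k = (k, k.+1).
Proof.
rewrite /apair /ncoord /rk; case: (sa_kind g) => // H.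
by rewrite ifF //; apply/negbTE; rewrite neq_ltn H.
Qed.

Lemma alpha_gen k c : (1 <= k)%N -> (k < ncoord g)%N ->
  alpha g k c = (if c == k.-1 then 1 else 0) - (if c == k then 1 else 0).
Proof.
move=> H1 H2; rewrite /alpha apair_gen //= /wsub /zeta.
by rewrite (ltnW H2) H2 /ebasis.
Qed.

Lemma ip_sym x y : ip g x y = ip g y x.
Proof. by apply: eq_bigr => i _; rewrite mulrAC. Qed.

Lemma ip2 x y p q : (p < ncoord g)%N -> (q < ncoord g)%N -> p != q ->
  (forall c, (c < ncoord g)%N -> c != p -> c != q -> x c = 0) ->
  ip g x y = sg p * x p * y p + sg q * x q * y q.
Proof.
move=> Hp Hq Hpq H; rewrite /ip (@sum2 _ (fun c => sg c * x c * y c) p q) //.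
by move=> c Hc H1 H2; rewrite H // mulr0 mul0r.
Qed.

Lemma ip1 x y p : (p < ncoord g)%N ->
  (forall c, (c < ncoord g)%N -> c != p -> x c = 0) ->
  ip g x y = sg p * x p * y p.
Proof.
move=> Hp H; rewrite /ip (@sum1 _ (fun c => sg c * x c * y c) p) //.
by move=> c Hc H1; rewrite H // mulr0 mul0r.
Qed.

Lemma ip_alpha_gen k y : (1 <= k)%N -> (k < ncoord g)%N ->
  ip g (alpha g k) y = sg k.-1 * y k.-1 - sg k * y k.
Proof.
move=> H1 H2; rewrite (@ip2 _ _ k.-1 k); try lia.
- rewrite !alpha_gen // eqxx; rewrite ifF; last by apply/negbTE; lia.
  rewrite ifF; last by apply/negbTE; lia.
  by rewrite eqxx subr0 sub0r mulr1 mulrN1 mulNr.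
- move=> c _ Hc1 Hc2; rewrite alpha_gen // (negbTE Hc1) (negbTE Hc2).
  by rewrite subrr.
Qed.


Lemma sg_neq0 c : sg c != 0.
Proof. by rewrite /sg; case: (vodd g _). Qed.

Ltac decide_ifs := repeat (case: eqP => ?; try (exfalso; lia)).

Lemma G1 j c : (1 <= j)%N -> (j < ncoord g)%N -> (1 <= c)%N -> (c < ncoord g)%N ->
  j != c -> j != c.-1 -> j != c.+1 -> ip g (alpha g j) (alpha g c) = 0.
Proof.
move=> *; rewrite ip_sym ip_alpha_gen // !alpha_gen //.
decide_ifs; ring.
Qed.

Lemma G2 c : (2 <= c)%N -> (c < ncoord g)%N -> ip g (alpha g c.-1) (alpha g c) = - sg c.-1.
Proof.
move=> *; rewrite ip_sym ip_alpha_gen ?alpha_gen //; try lia.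
decide_ifs; ring.
Qed.

Lemma G3 c : (1 <= c)%N -> (c.+1 < ncoord g)%N -> ip g (alpha g c.+1) (alpha g c) = - sg c.
Proof.
move=> *; rewrite ip_sym ip_alpha_gen ?alpha_gen //; try lia.
decide_ifs; ring.
Qed.

Lemma G4 c : (1 <= c)%N -> (c < ncoord g)%N -> ip g (alpha g c) (alpha g c) = sg c.-1 + sg c.
Proof.
move=> *; rewrite ip_alpha_gen ?alpha_gen //; try lia.
decide_ifs; ring.
Qed.

Lemma G3' c : (1 <= c)%N -> (c.+1 < ncoord g)%N -> ip g (alpha g c) (alpha g c.+1) = - sg c.
Proof. by move=> *; rewrite ip_sym G3. Qed.

Lemma NBgen j c : (1 <= j)%N -> (j < ncoord g)%N -> (1 <= c)%N -> (c < ncoord g)%N ->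
  j != c -> ip g (alpha g j) (alpha g c) != 0 -> j = c.-1 \/ j = c.+1.
Proof.
move=> H1 H2 H3 H4 H5 H6.
case: (eqVneq j c.-1) => [->|E1]; first by left.
case: (eqVneq j c.+1) => [->|E2]; first by right.
by rewrite G1 ?eqxx in H6.
Qed.

End Basic.

Section Propag.
Variables (r B U : nat) (A : nat -> nat -> int) (t : nat -> nat).
Hypothesis Hmap : forall k, 1 <= k <= r -> 1 <= t k <= r.
Hypothesis Hinj : forall i j, 1 <= i <= r -> 1 <= j <= r -> t i = t j -> i = j.
Hypothesis Hip : forall i j, 1 <= i <= r -> 1 <= j <= r -> A (t i) (t j) = A i j.
Hypothesis Hsym : forall i j, A i j = A j i.
Hypothesis Hcons : forall k, 1 <= k -> k.+1 <= U -> A k k.+1 != 0%R.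
Hypothesis HUr : U <= r.
Hypothesis HNB : forall c j, 1 <= c <= B -> 1 <= j <= r -> j != c -> A j c != 0%R ->
  j = c.-1 \/ j = c.+1.

Lemma step_down k : 1 <= k -> k.+1 <= B -> k.+2 <= U ->
  t k.+1 = k.+1 -> t k.+2 = k.+2 -> t k = k.
Proof.
move=> H1 H2 H3 E1 E2.
have Rk : 1 <= k <= r by lia.
have [Ht1 Ht2] : 1 <= t k /\ t k <= r by move: (Hmap Rk); lia.
have Hne : t k != k.+1.
  apply/eqP => E; have := Hinj (i:=k) (j:=k.+1) Rk; rewrite E1 E; lia.
have HA : A (t k) k.+1 != 0%R.
  have := Hip (i:=k) (j:=k.+1) Rk ltac:(lia); rewrite E1 => ->; apply: Hcons; lia.
have [//|E] := HNB (c:=k.+1) (j:=t k) ltac:(lia) ltac:(lia) Hne HA.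
have := Hinj (i:=k) (j:=k.+2) Rk; rewrite E E2; lia.
Qed.

Lemma step_up k : 1 <= k -> k.+1 <= B -> k.+2 <= U ->
  t k = k -> t k.+1 = k.+1 -> t k.+2 = k.+2.
Proof.
move=> H1 H2 H3 E1 E2.
have Rk : 1 <= k.+2 <= r by lia.
have [Ht1 Ht2] : 1 <= t k.+2 /\ t k.+2 <= r by move: (Hmap Rk); lia.
have Hne : t k.+2 != k.+1.
  apply/eqP => E; have := Hinj (i:=k.+2) (j:=k.+1) Rk; rewrite E E2; lia.
have HA : A (t k.+2) k.+1 != 0%R.
  have := Hip (i:=k.+2) (j:=k.+1) Rk ltac:(lia); rewrite E2 => ->; rewrite Hsym; apply: Hcons; lia.
have [E|//] := HNB (c:=k.+1) (j:=t k.+2) ltac:(lia) ltac:(lia) Hne HA.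
have := Hinj (i:=k.+2) (j:=k) Rk; rewrite E E1; lia.
Qed.

Lemma prop_down p : 1 <= p -> p <= B -> p.+1 <= U -> t p = p -> t p.+1 = p.+1 ->
  forall k, 1 <= k <= p.+1 -> t k = k.
Proof.
move=> H1 H2 H3 E1 E2.
suff S : forall d, d < p -> t (p - d) = p - d /\ t (p - d).+1 = (p - d).+1.
  move=> k Hk; case: (ltnP k p) => Hkp.
  - have := S (p - k) ltac:(lia); have -> : p - (p - k) = k by lia. by case.
  - case: (ltnP k p.+1) => Hk2; first by have -> : k = p by lia.
    by have -> : k = p.+1 by lia.
elim=> [|d IH] Hd; first by rewrite subn0.
have [IH1 IH2] := IH ltac:(lia).
have E : (p - d.+1).+1 = p - d by lia.
rewrite E; split=> //.
apply: step_down; try lia; rewrite ?E //.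
Qed.

Lemma prop_up p K : 1 <= p -> K <= B.+1 -> K <= U -> t p = p -> t p.+1 = p.+1 ->
  forall k, p <= k <= K -> t k = k.
Proof.
move=> H1 H2 H3 E1 E2.
suff S : forall d, p + d.+1 <= K -> t (p + d) = p + d /\ t (p + d).+1 = (p + d).+1.
  move=> k /andP [Hk1 Hk2]; case: (ltnP k K) => Hk3.
  - have := S (k - p) ltac:(lia); have -> : p + (k - p) = k by lia. by case.
  - case: (ltnP p k) => Hk4.
    + have := S (k.-1 - p) ltac:(lia); have -> : (p + (k.-1 - p)).+1 = k by lia. by case.
    + by have -> : k = p by lia.
elim=> [|d IH] Hd; first by rewrite addn0.
have [IH1 IH2] := IH ltac:(lia).
have E : p + d.+1 = (p + d).+1 by lia.
rewrite E; split=> //.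
apply: step_up; try lia; rewrite ?E //.
Qed.
End Propag.

Ltac decide_ifs := repeat (case: eqP => ?; try (exfalso; lia)).

Section OddSpo.
Local Open Scope ring_scope.
Variable g : superalg.
Hypothesis hm : (1 <= sa_m g)%N.
Hypothesis hn : (1 <= sa_n g)%N.
Hypothesis hk : sa_kind g = OSPodd \/ sa_kind g = SPO.

Definition wt : int := if sa_kind g is SPO then 2 else 1.

Lemma os_nc : ncoord g = rk g.
Proof. by rewrite /ncoord /rk; case: hk => ->. Qed.

Lemma os_rk : rk g = (sa_m g + sa_n g)%N.
Proof. by rewrite /rk; case: hk => ->. Qed.

Lemma os_tail c : alpha g (rk g) c = wt * (if c == (rk g).-1 then 1 else 0).
Proof.
rewrite /alpha /apair /wt /wsub /zeta /ncoord /dimV /rk /wopp /ebasis.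
case: hk => -> /=; rewrite leqnn ltnn.
- have -> : (((2 * sa_n g).+1 + 2 * sa_m g + 1) == (2 * (sa_m g + sa_n g).+1))%N = true by apply/eqP; lia.
  by rewrite subr0 mul1r.
- have -> : ((2 * sa_n g + 2 * sa_m g + 1) == (2 * (sa_m g + sa_n g).+1))%N = false by apply/negbTE; lia.
  have -> : (2 * sa_n g + 2 * sa_m g - (sa_m g + sa_n g).+1 = (sa_m g + sa_n g).-1)%N by lia.
  by case: eqP => _; rewrite ?subr0 // opprK.
Qed.

Lemma os_sg_last : sg g (rk g).-1 = 1.
Proof.
rewrite /sg /vodd os_rk /Neven /dimV ifF //; apply/negbTE; rewrite negb_or;
by case: hk => ->; apply/andP; split; lia.
Qed.

Lemma os_self : ip g (alpha g (rk g)) (alpha g (rk g)) = wt * wt.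
Proof.
rewrite (@ip1 g _ _ (rk g).-1); first last.
- by move=> c _ Hc; rewrite os_tail (negbTE Hc) mulr0.
- rewrite os_nc os_rk; lia.
by rewrite os_tail eqxx os_sg_last mulr1 mul1r.
Qed.

Lemma os_gen_tail j : (1 <= j)%N -> (j < rk g)%N ->
  ip g (alpha g j) (alpha g (rk g)) = if j == (rk g).-1 then - (wt * sg g j) else 0.
Proof.
move=> H1 H2; rewrite ip_alpha_gen ?os_nc // !os_tail.
decide_ifs; ring.
Qed.

Lemma wt_nz : wt != 0.
Proof. by rewrite /wt; case: (sa_kind g). Qed.

Lemma os_main tau : even_diag_aut g tau -> forall k, (1 <= k <= rk g)%N -> tau k = k.
Proof.
move=> [Hmap [Hinj [Hip _]]].
have Hr : (2 <= (rk g))%N by rewrite os_rk; lia.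
have Rr : inR g (rk g) by rewrite /inR; lia.
have [Tr1 Tr2] : (1 <= tau (rk g))%N /\ (tau (rk g) <= (rk g))%N by move: (Hmap _ Rr); rewrite /inR; lia.
have E1 : tau (rk g) = (rk g).
  case: (ltnP (tau (rk g)) (rk g)) => Hlt; last by lia.
  have := Hip _ _ Rr Rr; rewrite os_self G4 ?os_nc //.
  rewrite /wt /sg; case: hk => ->; case: (vodd _ _); case: (vodd _ _) => //.
have Rr1 : inR g (rk g).-1 by rewrite /inR; lia.
have [Ts1 Ts2] : (1 <= tau (rk g).-1)%N /\ (tau (rk g).-1 <= (rk g))%N by move: (Hmap _ Rr1); rewrite /inR; lia.
have Hne : tau (rk g).-1 != (rk g).
  by apply/eqP => E; have := Hinj _ _ Rr1 Rr; rewrite E E1; lia.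
have E2 : tau (rk g).-1 = (rk g).-1.
  have := Hip _ _ Rr1 Rr; rewrite E1 !os_gen_tail //; try lia.
  rewrite eqxx; case: eqP => [//|_] /esym /eqP.
  by rewrite oppr_eq0 mulf_eq0 (negbTE wt_nz) (negbTE (sg_neq0 _ _)).
have Hnc := os_nc.
have X1 : forall i, (1 <= i <= (rk g))%N -> (1 <= tau i <= (rk g))%N by move=> i Hi; apply: Hmap.
have X2 : forall i j, (1 <= i <= (rk g))%N -> (1 <= j <= (rk g))%N -> tau i = tau j -> i = j.
  by move=> i j Hi Hj; apply: Hinj.
have X3 : forall i j, (1 <= i <= (rk g))%N -> (1 <= j <= (rk g))%N ->
    ip g (alpha g (tau i)) (alpha g (tau j)) = ip g (alpha g i) (alpha g j).
  by move=> i j Hi Hj; apply: Hip.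
have X4 : forall i j, ip g (alpha g i) (alpha g j) = ip g (alpha g j) (alpha g i).
  by move=> i j; apply: ip_sym.
have X5 : forall i, (1 <= i)%N -> (i.+1 <= (rk g))%N -> ip g (alpha g i) (alpha g i.+1) != 0.
  move=> i Hi1 Hi2; case: (ltnP i.+1 (rk g)) => Hi3.
  + by rewrite G3' ?oppr_eq0 ?sg_neq0 //; lia.
  + have -> : i.+1 = (rk g) by lia.
    rewrite os_gen_tail; try lia. rewrite ifT; last by apply/eqP; lia.
    by rewrite oppr_eq0 mulf_eq0 negb_or wt_nz sg_neq0.
have X6 : forall c j, (1 <= c <= (rk g).-1)%N -> (1 <= j <= (rk g))%N -> j != c ->
    ip g (alpha g j) (alpha g c) != 0 -> j = c.-1 \/ j = c.+1.
  move=> c j Hc Hj Hjc Hip'.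
  case: (ltnP j (rk g)) => Hjr.
  + apply: (@NBgen g hm hn) => //; rewrite ?os_nc; lia.
  + have Ej : j = (rk g) by lia.
    move: Hip'; rewrite Ej ip_sym os_gen_tail; try lia.
    case: (eqVneq c (rk g).-1) => [Hc' _|Hc']; first by right; lia.
    by [] || (move=> /negP H; exfalso; apply: H; apply/eqP).
have P := prop_down X1 X2 X3 X5 (leqnn (rk g)) X6.
move=> k Hk; apply: (P (rk g).-1); try lia.
- by have -> : (rk g).-1.+1 = (rk g) by lia.
Qed.
End OddSpo.

Section OEven.
Local Open Scope ring_scope.
Variable g : superalg.
Hypothesis hm : (1 <= sa_m g)%N.
Hypothesis hn : (1 <= sa_n g)%N.
Hypothesis hk : sa_kind g = OSPeven.

Lemma oe_nc : ncoord g = rk g.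
Proof. by rewrite /ncoord /rk hk. Qed.

Lemma oe_rk : rk g = (sa_m g + sa_n g)%N.
Proof. by rewrite /rk hk. Qed.

Lemma oe_tail c : alpha g (rk g) c =
  (if c == (rk g).-2 then 1 else 0) + (if c == (rk g).-1 then 1 else 0).
Proof.
rewrite /alpha /apair hk eqxx /= /wsub /zeta /ncoord /dimV /rk /wopp /ebasis hk /=.
rewrite ltnn.
have -> : ((sa_m g + sa_n g).-1 <= sa_m g + sa_n g)%N = true by apply/idP; lia.
have -> : ((2 * sa_n g + 2 * sa_m g + 1) == (2 * (sa_m g + sa_n g).+1))%N = false by apply/negbTE; lia.
have -> : (2 * sa_n g + 2 * sa_m g - (sa_m g + sa_n g).+1 = (sa_m g + sa_n g).-1)%N by lia.
by case: eqP => _; rewrite ?opprK ?oppr0 ?subr0.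
Qed.

Lemma oe_sg c : (c < rk g)%N -> sg g c = if (c < sa_m g)%N then -1 else 1.
Proof.
move=> Hc; rewrite /sg /vodd /Neven /dimV hk oe_rk in Hc *.
have -> : (sa_m g + (2 * sa_n g + 2 * sa_m g - 2 * sa_m g) < c.+1)%N = false.
  by apply/negbTE; lia.
by rewrite orbF.
Qed.

Lemma oe_rpar k : (1 <= k)%N -> (k < rk g)%N -> rpar g k = (k == sa_m g).
Proof.
move=> H1 H2; rewrite /rpar apair_gen ?oe_nc //= /vodd /Neven /dimV hk.
rewrite oe_rk in H2.
have -> : (sa_m g + (2 * sa_n g + 2 * sa_m g - 2 * sa_m g) < k)%N = false by apply/negbTE; lia.
have -> : (sa_m g + (2 * sa_n g + 2 * sa_m g - 2 * sa_m g) < k.+1)%N = false by apply/negbTE; lia.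
case: (ltngtP k (sa_m g)) => H; rewrite /= ?orbF //.
Qed.

Lemma oe_rpar_tail : (2 <= sa_n g)%N -> rpar g (rk g) = false.
Proof.
move=> H; rewrite /rpar /apair hk eqxx /= /vodd /Neven /dimV hk /rk hk.
apply/negbTE; rewrite negb_add; apply/eqP.
have -> : ((sa_m g + sa_n g).-1 <= sa_m g)%N = false by apply/negbTE; lia.
have -> : ((sa_m g + sa_n g).+1 <= sa_m g)%N = false by apply/negbTE; lia.
have -> : (sa_m g + (2 * sa_n g + 2 * sa_m g - 2 * sa_m g) < (sa_m g + sa_n g).-1)%N = false by apply/negbTE; lia.
have -> : (sa_m g + (2 * sa_n g + 2 * sa_m g - 2 * sa_m g) < (sa_m g + sa_n g).+1)%N = false by apply/negbTE; lia.
by [].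
Qed.

Lemma oe_self_tail : ip g (alpha g (rk g)) (alpha g (rk g)) = sg g (rk g).-2 + sg g (rk g).-1.
Proof.
have Hr := oe_rk.
rewrite (@ip2 g _ _ (rk g).-2 (rk g).-1) ?oe_nc; try lia.
- rewrite !oe_tail; decide_ifs; ring.
- by move=> c _ H1 H2; rewrite oe_tail (negbTE H1) (negbTE H2) addr0.
Qed.

Lemma oe_gen_tail j : (1 <= j)%N -> (j < rk g)%N ->
  ip g (alpha g j) (alpha g (rk g)) =
  sg g j.-1 * ((if j.-1 == (rk g).-2 then 1 else 0) + (if j.-1 == (rk g).-1 then 1 else 0))
  - sg g j * ((if j == (rk g).-2 then 1 else 0) + (if j == (rk g).-1 then 1 else 0)).
Proof. by move=> H1 H2; rewrite ip_alpha_gen ?oe_nc // !oe_tail. Qed.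

Lemma oe_self_neg2 j : (1 <= j <= rk g)%N ->
  ip g (alpha g j) (alpha g j) = -2 -> (j < sa_m g)%N.
Proof.
move=> /andP [H1 H2].
case: (ltnP j (rk g)) => H3.
- rewrite G4 ?oe_nc // !oe_sg; try lia.
  case: (ltnP j.-1 (sa_m g)) => H4; case: (ltnP j (sa_m g)) => H5 //.
- have -> : j = rk g by lia.
  have Hr := oe_rk.
  rewrite oe_self_tail !oe_sg; try lia.
  have -> : ((rk g).-1 < sa_m g)%N = false by apply/negbTE; lia.
  by case: (_ < _)%N.
Qed.


Lemma oe_tail_adj j : (1 <= j)%N -> (j < (rk g).-1)%N ->
  ip g (alpha g j) (alpha g (rk g)) != 0 -> j = (rk g).-2.
Proof.
move=> H1 H2 Hip; case: (eqVneq j (rk g).-2) => // Hne.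
exfalso; move/eqP: Hip; apply; rewrite oe_gen_tail; try lia.
decide_ifs; ring.
Qed.

Lemma oe_main tau : even_diag_aut g tau -> forall k, (1 <= k <= (rk g) - 2)%N -> tau k = k.
Proof.
move=> [Hmap [Hinj [Hip Hpar]]].
have Hr := oe_rk. have Hnc := oe_nc.
have X1 : forall i, (1 <= i <= rk g)%N -> (1 <= tau i <= rk g)%N by move=> i Hi; apply: Hmap.
have X2 : forall i j, (1 <= i <= rk g)%N -> (1 <= j <= rk g)%N -> tau i = tau j -> i = j.
  by move=> i j Hi Hj; apply: Hinj.
have X3 : forall i j, (1 <= i <= rk g)%N -> (1 <= j <= rk g)%N ->
    ip g (alpha g (tau i)) (alpha g (tau j)) = ip g (alpha g i) (alpha g j).
  by move=> i j Hi Hj; apply: Hip.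
have X4 : forall i j, ip g (alpha g i) (alpha g j) = ip g (alpha g j) (alpha g i).
  by move=> i j; apply: ip_sym.
have X5 : forall i, (1 <= i)%N -> (i.+1 <= (rk g) - 2)%N -> ip g (alpha g i) (alpha g i.+1) != 0.
  by move=> i Hi1 Hi2; rewrite G3' ?oppr_eq0 ?sg_neq0 //; lia.
have XU : ((rk g) - 2 <= rk g)%N by lia.
have X6 : forall c j, (1 <= c <= (rk g) - 3)%N -> (1 <= j <= (rk g))%N -> j != c ->
    ip g (alpha g j) (alpha g c) != 0 -> j = c.-1 \/ j = c.+1.
  move=> c j Hc Hj Hjc Hip'.
  case: (ltnP j (rk g)) => Hjr.
  + apply: (@NBgen g hm hn) => //; rewrite ?Hnc; lia.
  + have Ej : j = (rk g) by lia.
    exfalso; move/eqP: Hip'; apply; rewrite Ej ip_sym oe_gen_tail; try lia.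
    decide_ifs; ring.
have Pd := prop_down X1 X2 X3 X5 XU X6.
have Pu := prop_up X1 X2 X3 X4 X5 XU X6.
have InR : forall i, (1 <= i <= rk g)%N -> inR g i by [].
have Tm : forall i, (1 <= i <= rk g)%N -> (1 <= tau i)%N /\ (tau i <= rk g)%N.
  by move=> i Hi; move: (X1 i Hi); lia.
case: (leqP 2 (sa_n g)) => Hn2.
- (* tau m = m by parity *)
  have Rm : (1 <= sa_m g <= rk g)%N by lia.
  have Em : tau (sa_m g) = sa_m g.
    have [T1 T2] := Tm _ Rm.
    have Hp := Hpar _ (InR _ Rm).
    rewrite [rpar g (sa_m g)]oe_rpar ?eqxx in Hp; try lia.
    case: (ltnP (tau (sa_m g)) (rk g)) => T3.
    + by move: Hp; rewrite oe_rpar; lia.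
    + have E : tau (sa_m g) = rk g by lia.
      by move: Hp; rewrite E oe_rpar_tail.
  case: (leqP 2 (sa_m g)) => Hm2.
  +
    have Rm1 : (1 <= (sa_m g).-1 <= rk g)%N by lia.
    have [T1 T2] := Tm _ Rm1.
    have Em1 : tau (sa_m g).-1 = (sa_m g).-1.
      have Hs : ip g (alpha g (tau (sa_m g).-1)) (alpha g (tau (sa_m g).-1)) = -2.
        rewrite X3 // G4 ?Hnc ?oe_sg; try lia.
        by rewrite ifT; [rewrite ifT | lia]; [| lia].
      have Hlt := oe_self_neg2 (j := tau (sa_m g).-1) ltac:(lia) Hs.
      have Ha : ip g (alpha g (tau (sa_m g).-1)) (alpha g (sa_m g)) != 0.
        rewrite -{2}Em X3 //; have -> : sa_m g = (sa_m g).-1.+1 by lia.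
        by apply: X5; lia.
      have [E|E] := NBgen hm hn (j := tau (sa_m g).-1) (c := sa_m g) ltac:(lia) ltac:(lia)
        ltac:(lia) ltac:(lia) ltac:(apply/eqP; lia) Ha; lia.
    have Em' : tau (sa_m g).-1.+1 = (sa_m g).-1.+1 by have -> : (sa_m g).-1.+1 = sa_m g by lia.
    move=> k Hk; case: (leqP k (sa_m g)) => Hkm.
    * apply: (Pd (sa_m g).-1); lia.
    * apply: (Pu (sa_m g).-1 ((rk g) - 2)%N); lia.
  +
    have Em1 : sa_m g = 1%N by lia.
    move=> k Hk; case: (leqP k 1) => Hk1; first by (have -> : k = sa_m g by lia); exact: Em.
    have R2 : (1 <= 2 <= rk g)%N by lia.
    have [T1 T2] := Tm _ R2.
    have E1 : tau 1%N = 1%N by move: Em; rewrite Em1.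
    have R1 : (1 <= 1 <= rk g)%N by lia.
    have E2 : tau 2%N = 2%N.
      have Ha : ip g (alpha g (tau 2%N)) (alpha g 1) != 0.
        have := X3 2%N 1%N R2 R1; rewrite E1 => ->; rewrite X4; by apply: X5; lia.
      have Hne : tau 2%N != 1%N.
        apply/eqP => E; have := X2 2%N 1%N R2 R1; rewrite E E1; lia.
      have C1 : (1 <= 1 <= rk g - 3)%N by lia.
      have C2 : (1 <= tau 2%N <= rk g)%N by lia.
      have [E|E] := X6 1%N (tau 2%N) C1 C2 Hne Ha; lia.
    apply: (Pu 1%N ((rk g) - 2)%N); lia.
-
  have Hn1 : sa_n g = 1%N by lia.
  move=> k Hk.
  have Rm1 : (1 <= (sa_m g).-1 <= rk g)%N by lia.
  have Rm : (1 <= sa_m g <= rk g)%N by lia.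
  have [T1 T2] := Tm _ Rm1.
  have [U1 U2] := Tm _ Rm.
  have Hs : ip g (alpha g (tau (sa_m g).-1)) (alpha g (tau (sa_m g).-1)) = -2.
    rewrite X3 // G4 ?Hnc ?oe_sg; try lia.
    by rewrite ifT; [rewrite ifT | lia]; [| lia].
  have Hlt := oe_self_neg2 (j := tau (sa_m g).-1) ltac:(lia) Hs.
  have Ha : ip g (alpha g (tau (sa_m g).-1)) (alpha g (tau (sa_m g))) != 0.
    rewrite X3 //; have -> : sa_m g = (sa_m g).-1.+1 by lia.
    by rewrite G3' ?oppr_eq0 ?sg_neq0 //; lia.
  have Em1 : tau (sa_m g).-1 = (sa_m g).-1.
    case: (ltnP (tau (sa_m g)) (rk g)) => U3.
    + have Hs0 : ip g (alpha g (tau (sa_m g))) (alpha g (tau (sa_m g))) = 0.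
        rewrite X3 // G4 ?Hnc ?oe_sg; try lia.
        by rewrite ifT; [rewrite ifF | lia]; [rewrite addrC subrr | apply/negbTE; lia].
      have Eu : tau (sa_m g) = sa_m g.
        move: Hs0; rewrite G4 ?Hnc ?oe_sg; try lia.
        case: (ltnP (tau (sa_m g)).-1 (sa_m g)) => V1; case: (ltnP (tau (sa_m g)) (sa_m g)) => V2 //; lia.
      rewrite Eu in Ha.
      have [E|E] := NBgen hm hn (j := tau (sa_m g).-1) (c := sa_m g) ltac:(lia) ltac:(lia)
        ltac:(lia) ltac:(lia) ltac:(apply/eqP; lia) Ha; lia.
    + have Eu : tau (sa_m g) = rk g by lia.
      rewrite Eu in Ha; have := oe_tail_adj (j := tau (sa_m g).-1) T1 ltac:(lia) Ha; lia.
  case: (leqP k (sa_m g).-2) => Hk2; last first.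
    by have -> : k = (sa_m g).-1 by lia.
  have Rm2 : (1 <= (sa_m g).-2 <= rk g)%N by lia.
  have [W1 W2] := Tm _ Rm2.
  have Em2 : tau (sa_m g).-2 = (sa_m g).-2.
    have Hs2 : ip g (alpha g (tau (sa_m g).-2)) (alpha g (tau (sa_m g).-2)) = -2.
      rewrite X3 // G4 ?Hnc ?oe_sg; try lia.
      by rewrite ifT; [rewrite ifT | lia]; [| lia].
    have Hlt2 := oe_self_neg2 (j := tau (sa_m g).-2) ltac:(lia) Hs2.
    have Ha2 : ip g (alpha g (tau (sa_m g).-2)) (alpha g (sa_m g).-1) != 0.
      rewrite -{2}Em1 X3 //; have -> : (sa_m g).-1 = (sa_m g).-2.+1 by lia.
      by apply: X5; lia.
    have Hne : tau (sa_m g).-2 != (sa_m g).-1.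
      apply/eqP => E; have := X2 _ _ Rm2 Rm1; rewrite E Em1; lia.
    have [E|E] := NBgen hm hn (j := tau (sa_m g).-2) (c := (sa_m g).-1) ltac:(lia) ltac:(lia)
        ltac:(lia) ltac:(lia) Hne Ha2; lia.
  have Em1' : tau (sa_m g).-2.+1 = (sa_m g).-2.+1.
    by have -> : (sa_m g).-2.+1 = (sa_m g).-1 by lia.
  apply: (Pd (sa_m g).-2); lia.
Qed.
End OEven.


Section GLs.
Local Open Scope ring_scope.
Variable g : superalg.
Hypothesis hm : (1 <= sa_m g)%N.
Hypothesis hn : (1 <= sa_n g)%N.
Hypothesis hk : sa_kind g = GL.
Variable L : nat -> bool.

Lemma gl_nc : ncoord g = (rk g).+1.
Proof. by rewrite (nc_rk hm hn) /is_gl hk. Qed.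

Lemma gl_dimV : dimV g = ncoord g.
Proof. by rewrite /ncoord hk. Qed.

Lemma gl_inspan i j : inspan g L i j =
  has (fun k => sameC g L i k && ((j == k) || (j == k.+1))) (iota 1 (rk g)).
Proof. by rewrite /inspan /compTail /apair hk. Qed.

Lemma gl_wimg i j : wimg g L i j =
  if inspan g L i j then zeta g (span_rev g L i j) else zeta g j.
Proof. by rewrite /wimg /is_gl hk. Qed.

Lemma zeta_le j c : (1 <= j)%N -> (j <= ncoord g)%N -> zeta g j c = if c == j.-1 then 1 else 0.
Proof. by move=> H1 H2; rewrite /zeta H2. Qed.

Lemma mem_spanseq i j : (j \in spanseq g L i) = inspan g L i j && (1 <= j <= ncoord g)%N.
Proof.
rewrite /spanseq mem_filter mem_iota gl_dimV; congr (_ && _).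
Qed.

Lemma span_rev_mem i j : j \in spanseq g L i -> span_rev g L i j \in spanseq g L i.
Proof.
move=> Hj; rewrite /span_rev.
have Hi : (index j (spanseq g L i) < size (rev (spanseq g L i)))%N by rewrite size_rev index_mem.
by rewrite -mem_rev; apply: mem_nth.
Qed.

Lemma P1 i x c : (c < ncoord g)%N -> ~~ inspan g L i c.+1 -> wcomp g L i x c = x c.
Proof.
move=> Hc Hs; rewrite /wcomp (@sum1 _ (fun c' => x c' * wimg g L i c'.+1 c) c) //=.
  by rewrite gl_wimg (negbTE Hs) zeta_le // eqxx mulr1.
move=> c' Hc' Hne; rewrite gl_wimg; case: ifP => H.
- have Hm : c'.+1 \in spanseq g L i by rewrite mem_spanseq H /=; lia.
  have := span_rev_mem Hm; rewrite mem_spanseq => /andP [H1 H2].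
  rewrite zeta_le; try lia.
  case: eqP => [E|_]; last by rewrite mulr0.
  have E2 : c.+1 = span_rev g L i c'.+1 by lia.
  by move: Hs; rewrite E2 H1.
- by rewrite zeta_le //= eq_sym (negbTE Hne) mulr0.
Qed.

Lemma P2 i x c : (c < ncoord g)%N -> inspan g L i c.+1 ->
  (forall c', (c' < ncoord g)%N -> inspan g L i c'.+1 -> x c' = 0) -> wcomp g L i x c = 0.
Proof.
move=> Hc Hs Hx; rewrite /wcomp big1 // => c' _.
rewrite gl_wimg; case: ifP => H; first by rewrite Hx // mul0r.
rewrite zeta_le //=; case: eqP => [E|_]; last by rewrite mulr0.
by move: H; rewrite -E Hs.
Qed.


Definition FF (i : nat) (y : weight) := if isrep g L i then wcomp g L i y else y.

Lemma wL_fold x : wL g L x = foldr FF x (iota 1 (rk g)).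
Proof. by []. Qed.

Lemma fold_fix x c : (c < ncoord g)%N ->
  (forall i, isrep g L i -> ~~ inspan g L i c.+1) -> wL g L x c = x c.
Proof.
move=> Hc H; rewrite wL_fold; elim: (iota 1 (rk g)) => //= i s IH.
rewrite /FF; case: ifP => Hr //; by rewrite P1 // H.
Qed.

Lemma fold_zero x :
  (forall c i, (c < ncoord g)%N -> isrep g L i -> inspan g L i c.+1 -> x c = 0) ->
  forall c, (c < ncoord g)%N -> wL g L x c = x c.
Proof.
move=> Hx; rewrite wL_fold; elim: (iota 1 (rk g)) => //= i s IH c Hc.
rewrite /FF; case: ifP => Hr //; last by apply: IH.
case: (boolP (inspan g L i c.+1)) => Hs.
- rewrite P2 //; first by rewrite (Hx c i).
  by move=> c' Hc' Hs'; rewrite IH // (Hx c' i).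
- by rewrite P1 // IH.
Qed.

End GLs.

Lemma reach_back (e : nat -> nat -> bool) dom n i j : i \in dom -> reach e dom n i j ->
  i = j \/ exists k, k \in dom /\ e k j.
Proof.
elim: n i => [|n IH] i Hi /=; first by move/eqP; left.
case/orP => [/eqP|]; first by left.
case/hasP => k Hk /andP [Hik Hr].
case: (IH k Hk Hr) => [E|[k' [H1 H2]]].
- by right; exists i; rewrite -E.
- by right; exists k'.
Qed.

Lemma reach_fwd (e : nat -> nat -> bool) dom n i j : reach e dom n i j ->
  i = j \/ exists k, k \in dom /\ e i k.
Proof.
case: n => [|n] /=; first by move/eqP; left.
case/orP => [/eqP|]; first by left.
by case/hasP => k Hk /andP [Hik _]; right; exists k.
Qed.


Section GLs2.
Local Open Scope ring_scope.
Variable g : superalg.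
Hypothesis hm : (1 <= sa_m g)%N.
Hypothesis hn : (1 <= sa_n g)%N.
Hypothesis hk : sa_kind g = GL.
Variable L : nat -> bool.

Lemma adj_sym i j : adj g i j = adj g j i.
Proof. by rewrite /adj eq_sym ip_sym. Qed.

Lemma gl_adj_succ k : (1 <= k)%N -> (k < rk g)%N -> adj g k k.+1.
Proof.
move=> H1 H2; rewrite /adj; apply/andP; split; first by apply/eqP; lia.
by rewrite G3' ?oppr_eq0 ?sg_neq0 // (gl_nc hm hn hk).
Qed.

Lemma inL_dom k : inL g L k -> k \in [seq k <- iota 1 (rk g) | L k].
Proof. by rewrite /inL /inR mem_filter mem_iota => /andP [H1 ->] /=; lia. Qed.

Lemma dom_inL k : k \in [seq k <- iota 1 (rk g) | L k] -> inL g L k.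
Proof. by rewrite /inL /inR mem_filter mem_iota => /andP [-> H] /=; apply/andP; lia. Qed.

Variable a : nat.
Hypothesis Hsing : singleton g L a.

Lemma sing_inL : inL g L a.
Proof. by case: Hsing. Qed.

Lemma sing_R : (1 <= a <= rk g)%N.
Proof. by have := sing_inL; rewrite /inL /inR => /andP []. Qed.

Lemma sameC_a_l k : sameC g L a k -> k = a.
Proof.
rewrite /sameC => /andP [/andP [_ _] /reach_fwd [//|[k' [H1 H2]]]].
by case: Hsing => _ /(_ k' (dom_inL H1)); rewrite H2.
Qed.

Lemma sameC_a_r i : sameC g L i a -> i = a.
Proof.
rewrite /sameC => /andP [/andP [Hi _] /(reach_back (inL_dom Hi)) [//|[k' [H1 H2]]]].
by case: Hsing => _ /(_ k' (dom_inL H1)); rewrite adj_sym H2.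
Qed.

Lemma sameC_aa : sameC g L a a.
Proof.
rewrite /sameC sing_inL /=; case: (rk g) => [|n] /=; first by rewrite eqxx.
by rewrite eqxx.
Qed.

Lemma sing_isrep : isrep g L a.
Proof.
rewrite /isrep sing_inL /=; apply/hasPn => k; rewrite mem_iota => Hk.
by apply/negP => /sameC_a_l E; lia.
Qed.

Lemma not_inL_pred : ~~ inL g L a.-1.
Proof.
apply/negP => H; case: Hsing => _ /(_ _ H); rewrite adj_sym.
have HR := sing_R; have : (1 <= a.-1)%N by move: H; rewrite /inL /inR; case/andP => /andP [] *; lia.
move=> H1; have -> : a = a.-1.+1 by lia.
by rewrite gl_adj_succ //; lia.
Qed.

Lemma not_inL_succ : ~~ inL g L a.+1.
Proof.
apply/negP => H; case: Hsing => _ /(_ _ H).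
have HR := sing_R; have : (a < rk g)%N by move: H; rewrite /inL /inR; case/andP => /andP [] *; lia.
by move=> H1; rewrite gl_adj_succ //; lia.
Qed.

Lemma sameC_inL i k : sameC g L i k -> inL g L k.
Proof. by rewrite /sameC => /andP [/andP [_ ->]]. Qed.

Lemma other_span i j : i != a -> (j == a) || (j == a.+1) -> ~~ inspan g L i j.
Proof.
move=> Hia Hj; rewrite (gl_inspan hk); apply/hasPn => k _; apply/negP => /andP [Hs Hjk].
have Hk := sameC_inL Hs.
case: (eqVneq k a) => [E|Hka].
- by move: Hs; rewrite E => /sameC_a_r E'; rewrite E' eqxx in Hia.
- case/orP: Hj => /eqP Ej; case/orP: Hjk => /eqP E; subst j.
  + by rewrite E eqxx in Hka.
  + have Ek : k = a.-1 by lia.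
    by move: Hk; rewrite Ek (negbTE not_inL_pred).
  + by move: Hk; rewrite -E (negbTE not_inL_succ).
  + by move: Hka; rewrite (_ : k = a) ?eqxx //; lia.
Qed.

Lemma a_span j : inspan g L a j = (j == a) || (j == a.+1).
Proof.
rewrite (gl_inspan hk); apply/hasP/idP.
- by case=> k _ /andP [/sameC_a_l -> ->].
- move=> H; exists a; last by rewrite sameC_aa H.
  by rewrite mem_iota; have := sing_R; lia.
Qed.

Lemma a_spanseq : spanseq g L a = [:: a; a.+1].
Proof.
rewrite /spanseq (eq_filter a_span) gl_dimV // gl_nc //.
have HR := sing_R.
have -> : (rk g).+1 = (a.-1 + (2 + ((rk g).+1 - a.+1)))%N by lia.
rewrite iotaD filter_cat iotaD filter_cat.
have -> : (1 + a.-1 = a)%N by lia.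
rewrite (eq_in_filter (a2 := pred0)); last first.
  by move=> x; rewrite mem_iota => Hx; apply/negbTE; lia.
rewrite filter_pred0 /= !eqxx orbT /=.
rewrite (eq_in_filter (a2 := pred0)); last first.
  by move=> x; rewrite mem_iota => Hx; apply/negbTE; lia.
by rewrite filter_pred0.
Qed.

Lemma span_rev_a : span_rev g L a a = a.+1.
Proof. by rewrite /span_rev a_spanseq /= eqxx. Qed.

Lemma span_rev_a1 : span_rev g L a a.+1 = a.
Proof.
rewrite /span_rev a_spanseq /= ifF; last by apply/negbTE; lia.
by rewrite eqxx.
Qed.

Lemma P3 x : wcomp g L a x a.-1 = x a.
Proof.
have HR := sing_R.
have Hnc := gl_nc hm hn hk.
rewrite /wcomp (@sum1 _ (fun c' => x c' * wimg g L a c'.+1 a.-1) a) /=; first last.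
- move=> c' Hc' Hne; rewrite (@gl_wimg g hk L) a_span.
  case: (eqVneq c'.+1 a) => [E|Ha] /=.
  + by rewrite E span_rev_a zeta_le //; try lia; rewrite ifF ?mulr0 //; apply/negbTE; lia.
  + rewrite ifF; last by apply/negbTE; lia.
    rewrite zeta_le //; try lia; rewrite ifF ?mulr0 //; apply/negbTE; lia.
- lia.
by rewrite (@gl_wimg g hk L) a_span eqxx orbT span_rev_a1 zeta_le // ?eqxx ?mulr1 //; lia.
Qed.

Lemma fold_swap x : wL g L x a.-1 = x a.
Proof.
have HR := sing_R.
have Hnc := gl_nc hm hn hk.
suff S : forall s, uniq s ->
   (a \notin s -> foldr (FF g L) x s a = x a) /\ (a \in s -> foldr (FF g L) x s a.-1 = x a).
  rewrite wL_fold; apply: (proj2 (S _ (iota_uniq _ _))).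
  by rewrite mem_iota; lia.
elim=> [|i s IH] //= /andP [Hi Hu]; have [IH1 IH2] := IH Hu.
split.
- rewrite in_cons negb_or => /andP [Hia Has].
  rewrite /FF; case: ifP => Hr; last by apply: IH1.
  rewrite P1 //; first by apply: IH1.
  + lia.
  + by apply: other_span; [rewrite eq_sym | rewrite eqxx orbT].
- rewrite in_cons; case: (eqVneq a i) => [E|Hne] /=.
  + move=> _; rewrite -E /FF sing_isrep P3; apply: IH1; by rewrite -E in Hi.
  + move=> Has; rewrite /FF; case: ifP => Hr; last by apply: IH2.
    rewrite P1 //; first by apply: IH2.
    * lia.
    * have -> : a.-1.+1 = a by lia.
      by apply: other_span; rewrite ?eqxx // eq_sym.
Qed.

End GLs2.

Section GLmain.
Local Open Scope ring_scope.
Variable g : superalg.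
Hypothesis hm : (1 <= sa_m g)%N.
Hypothesis hn : (1 <= sa_n g)%N.
Hypothesis hk : sa_kind g = GL.
Variable L : nat -> bool.
Variable tau : nat -> nat.
Hypothesis Haut : even_diag_aut g tau.

Lemma gl_prop p : (1 <= p)%N -> (p < rk g)%N -> tau p = p -> tau p.+1 = p.+1 ->
  forall k, (1 <= k <= rk g)%N -> tau k = k.
Proof.
move: Haut => [Hmap [Hinj [Hip _]]] H1 H2 E1 E2.
have Hnc := gl_nc hm hn hk.
have X1 : forall i, (1 <= i <= rk g)%N -> (1 <= tau i <= rk g)%N by move=> i Hi; apply: Hmap.
have X2 : forall i j, (1 <= i <= rk g)%N -> (1 <= j <= rk g)%N -> tau i = tau j -> i = j.
  by move=> i j Hi Hj; apply: Hinj.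
have X3 : forall i j, (1 <= i <= rk g)%N -> (1 <= j <= rk g)%N ->
    ip g (alpha g (tau i)) (alpha g (tau j)) = ip g (alpha g i) (alpha g j).
  by move=> i j Hi Hj; apply: Hip.
have X4 : forall i j, ip g (alpha g i) (alpha g j) = ip g (alpha g j) (alpha g i).
  by move=> i j; apply: ip_sym.
have X5 : forall i, (1 <= i)%N -> (i.+1 <= rk g)%N -> ip g (alpha g i) (alpha g i.+1) != 0.
  by move=> i Hi1 Hi2; rewrite G3' ?oppr_eq0 ?sg_neq0 //; lia.
have X6 : forall c j, (1 <= c <= rk g)%N -> (1 <= j <= rk g)%N -> j != c ->
    ip g (alpha g j) (alpha g c) != 0 -> j = c.-1 \/ j = c.+1.
  by move=> c j Hc Hj Hjc Hip'; apply: (@NBgen g hm hn) => //; lia.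
move=> k Hk; case: (leqP k p.+1) => Hkp.
- apply: (prop_down X1 X2 X3 X5 (leqnn _) X6 (p := p)); lia.
- apply: (prop_up X1 X2 X3 X4 X5 (leqnn _) X6 (p := p) (K := rk g)); lia.
Qed.

Lemma gl_fixed_adj a b : (1 <= a <= rk g)%N -> (1 <= b <= rk g)%N -> a != b ->
  ip g (alpha g a) (alpha g b) != 0 -> tau a = a -> tau b = b ->
  forall k, (1 <= k <= rk g)%N -> tau k = k.
Proof.
move=> Ha Hb Hab Hip Ea Eb.
have Hnc := gl_nc hm hn hk.
have [E|E] := NBgen hm hn (j := a) (c := b) ltac:(lia) ltac:(lia) ltac:(lia) ltac:(lia) Hab Hip.
- have E' : a.+1 = b by lia.
  by apply: (gl_prop (p := a)); rewrite ?E' //; lia.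
- have E' : b.+1 = a by lia.
  by apply: (gl_prop (p := b)); rewrite ?E' //; lia.
Qed.

End GLmain.

Section GLfin.
Local Open Scope ring_scope.
Variable g : superalg.
Hypothesis hm : (1 <= sa_m g)%N.
Hypothesis hn : (1 <= sa_n g)%N.
Hypothesis hk : sa_kind g = GL.
Variable L : nat -> bool.
Variable tau : nat -> nat.
Hypothesis Hps : pseudo_symmetric g L tau.

Lemma sing_tau a : singleton g L a -> tau a = a.
Proof.
move=> Hs; move: Hps => [_ [[Hmap _] [H3 _]]].
have Hnc := gl_nc hm hn hk.
have HR := sing_R Hs.
have HL := sing_inL Hs.
have HRa : inR g a by move: HL; rewrite /inL => /andP [].
have := H3 a HL a.-1 ltac:(lia).
rewrite /wopp (fold_swap hm hn hk Hs) !alpha_gen; try lia.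
- have := Hmap a HRa; rewrite /inR => HT.
  decide_ifs; try done.
  move=> _; lia.
- by have := Hmap a HRa; rewrite /inR; lia.
- by have := Hmap a HRa; rewrite /inR; lia.
Qed.


Lemma F2_contra b : (2 <= b)%N -> (b < rk g)%N -> rpar g b ->
  (forall i j, (j == b) || (j == b.+1) -> ~~ inspan g L i j) ->
  ip g (wadd (alpha g b) (wL g L (alpha g b))) (wsub (alpha g b.-1) (wL g L (alpha g b.+1))) != 0.
Proof.
move=> Hb2 Hbr Hpb nospan.
have Hnc := gl_nc hm hn hk.
have B1 : (1 <= b)%N by lia.
have B2 : (b < ncoord g)%N by lia.
have B3 : (1 <= b.-1)%N by lia.
have B4 : (b.-1 < ncoord g)%N by lia.
have B5 : (1 <= b.+1)%N by lia.
have B6 : (b.+1 < ncoord g)%N by lia.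
have B7 : b.-1 != b by apply/eqP; lia.
have B8 : b.-1.+1 = b by lia.
have Hfz : forall c, (c < ncoord g)%N -> wL g L (alpha g b) c = alpha g b c.
  apply: (fold_zero hm hn hk) => c i Hc Hi Hs.
  rewrite alpha_gen //.
  case: (eqVneq c b.-1) => [E|Hc1].
    by move: Hs; rewrite E B8 (negbTE (nospan _ _ _)) ?eqxx.
  case: (eqVneq c b) => [E|Hc2].
    by move: Hs; rewrite E (negbTE (nospan _ _ _)) // eqxx orbT.
  by rewrite subrr.
have Hff1 : wL g L (alpha g b.+1) b.-1 = alpha g b.+1 b.-1.
  apply: (fold_fix hm hn hk) => // i _; apply: nospan; by rewrite B8 eqxx.
have Hff2 : wL g L (alpha g b.+1) b = alpha g b.+1 b.
  apply: (fold_fix hm hn hk) => // i _; apply: nospan; by rewrite eqxx orbT.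
rewrite (@ip2 g _ _ b.-1 b) //.
- rewrite /wadd /wsub !Hfz // Hff1 Hff2 !alpha_gen //.
  move: Hpb; rewrite /rpar apair_gen //.
  rewrite /= /sg B8 => Hx; apply/eqP.
  decide_ifs.
  by move: Hx; case: (vodd g b); case: (vodd g b.+1) => //= _; lia.
- move=> c Hc H1 H2; rewrite /wadd Hfz // alpha_gen //.
  by rewrite (negbTE H1) (negbTE H2); ring.
Qed.

Lemma F2_case : F2 g L tau -> forall k, (1 <= k <= rk g)%N -> tau k = k.
Proof.
move=> [a [b [Ha [Hb [Hpb [Hbb [Eb [Hnl Hab]]]]]]]].
move: Hps => [_ [Haut [_ [_ H5]]]].
have Haut' := Haut; move: Haut' => [Hmap [Hinj [Hip _]]].
have Hnc := gl_nc hm hn hk.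
have Ra : (1 <= a <= rk g)%N by move: Ha; rewrite /inLbar /inR => /andP [].
have Rb : (1 <= b <= rk g)%N by move: Hb; rewrite /inLbar /inR => /andP [].
have Lb : L b = false by move: Hb; rewrite /inLbar => /andP [_ /negbTE].
have Hab' : a != b by apply/eqP => E; move: Hab; rewrite E Hbb eqxx.
have nLm : (2 <= b)%N -> ~~ inL g L b.-1.
  move=> H2; apply/negP => H; move: (Hnl _ H); rewrite adj_sym.
  have -> : b = b.-1.+1 by lia.
  by rewrite gl_adj_succ //; lia.
have nLp : ~~ inL g L b.+1.
  apply/negP => H; move: (Hnl _ H).
  have : (b < rk g)%N by move: H; rewrite /inL /inR => /andP [/andP [] *]; lia.
  by move=> H'; rewrite gl_adj_succ //; lia.
have nospan : forall i j, (j == b) || (j == b.+1) -> ~~ inspan g L i j.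
  move=> i j Hj; rewrite (gl_inspan hk); apply/hasPn => k _; apply/negP => /andP [Hs Hjk].
  have Hk := sameC_inL Hs.
  case/orP: Hj => /eqP Ej; case/orP: Hjk => /eqP E; subst j.
  + by move: Hk; rewrite -E /inL Lb andbF.
  + have Ek : k = b.-1 by lia.
    have Hk1 : (1 <= k)%N by move: Hk; rewrite /inL /inR => /andP [/andP [] *].
    by move: Hk; rewrite Ek; apply/negP/nLm; lia.
  + by move: Hk; rewrite -E (negbTE nLp).
  + by move: Hk; rewrite (_ : k = b) ?/inL ?Lb ?andbF //; lia.
have Ea := NBgen hm hn (j := a) (c := b) ltac:(lia) ltac:(lia) ltac:(lia) ltac:(lia) Hab' Hab.
case: (leqP 2 b) => Hb2.
-
  have Rb1 : inR g b.-1 by rewrite /inR; lia.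
  have Rb' : inR g b by rewrite /inR; lia.
  have [T1 T2] : (1 <= tau b.-1)%N /\ (tau b.-1 <= rk g)%N by move: (Hmap _ Rb1); rewrite /inR; lia.
  have Hne : tau b.-1 != b.
    by apply/eqP => E; have := Hinj _ _ Rb1 Rb'; rewrite E Eb; lia.
  have Hipu : ip g (alpha g (tau b.-1)) (alpha g b) != 0.
    have := Hip _ _ Rb1 Rb'; rewrite Eb => ->.
    have -> : b = b.-1.+1 by lia.
    by rewrite G3' ?oppr_eq0 ?sg_neq0 //; lia.
  have [Eu|Eu] := NBgen hm hn (j := tau b.-1) (c := b) ltac:(lia) ltac:(lia) ltac:(lia) ltac:(lia) Hne Hipu.
  + apply: (gl_prop hm hn hk Haut (p := b.-1)); try lia.
    by have -> : b.-1.+1 = b by lia.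
  + exfalso.
    have Lb1 : inLbar g L b.-1.
      rewrite /inLbar Rb1 /=; apply/negP => Hl; move: (nLm ltac:(lia)).
      by rewrite /inL Rb1 Hl.
    have := H5 b b.-1 Hb Lb1; rewrite /tilde Eb Eu.
    by apply/eqP; apply: (F2_contra (b := b)) => //; lia.
- have Eb1 : b = 1%N by lia.
  have R2 : inR g 2%N by rewrite /inR; lia.
  have R1 : inR g 1%N by rewrite /inR; lia.
  have E1 : tau 1%N = 1%N by rewrite -{1}Eb1 Eb.
  have [T1 T2] : (1 <= tau 2%N)%N /\ (tau 2%N <= rk g)%N by move: (Hmap _ R2); rewrite /inR; lia.
  have Hne : tau 2%N != 1%N.
    by apply/eqP => E; have := Hinj _ _ R2 R1; rewrite E E1; lia.
  have Hipu : ip g (alpha g (tau 2%N)) (alpha g 1%N) != 0.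
    have := Hip _ _ R2 R1; rewrite E1 => ->.
    by rewrite G3 ?oppr_eq0 ?sg_neq0 //; lia.
  have [Eu|Eu] := NBgen hm hn (j := tau 2%N) (c := 1%N) ltac:(lia) ltac:(lia) ltac:(lia) ltac:(lia) Hne Hipu.
  * lia.
  * apply: (gl_prop hm hn hk Haut (p := 1%N)); lia.
Qed.


Lemma sing_adj_case a b : singleton g L a -> inLbar g L b -> tau b = b ->
  ip g (alpha g a) (alpha g b) != 0 -> forall k, (1 <= k <= rk g)%N -> tau k = k.
Proof.
move=> Hs Hb Eb Hab.
have Ea := sing_tau Hs.
have HR := sing_R Hs.
have HL := sing_inL Hs.
move: Hps => [_ [Haut _]].
have Rb : (1 <= b <= rk g)%N by move: Hb; rewrite /inLbar /inR => /andP [].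
have Hne : a != b.
  apply/eqP => E; move: HL Hb; rewrite E /inL /inLbar => /andP [_ ->] /andP [_].
  by [].
exact: (gl_fixed_adj hm hn hk Haut HR Rb Hne Hab Ea Eb).
Qed.

Lemma gl_main : violates_selection_rules g L tau -> forall k, (1 <= k <= rk g)%N -> tau k = k.
Proof.
case=> [|[|[|]]].
- move=> [b [a [Hb [Ha [_ [_ [Eb [Hab [Hs _]]]]]]]]].
  exact: (sing_adj_case Hs Hb Eb Hab).
- exact: F2_case.
- move=> [a [b [c [s' [Ha [Hc [_ [_ [Hb [_ [Hs [_ [Hab [_ [_ [_ [_ [_ [Hsa [_ [_ [Eb _]]]]]]]]]]]]]]]]]]]]]].
  exact: (sing_adj_case Hsa Hb Eb Hab).
- by move=> [[Hk _] _]; rewrite hk in Hk.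
Qed.

End GLfin.

Unset Implicit Arguments.

Theorem mainTheorem15 (g : superalg) (L : nat -> bool) (tau : nat -> nat) :
  1 <= sa_m g -> 1 <= sa_n g ->
  pseudo_symmetric g L tau ->
  violates_selection_rules g L tau ->
  forall k, inD0 g k -> tau k = k.
Proof.
move=> hm hn Hps Hv k; rewrite /inD0.
have Haut : even_diag_aut g tau := proj1 (proj2 Hps).
case E: (sa_kind g) => Hk.
- exact: (gl_main hm hn E Hps Hv).
- apply: (os_main hm hn (or_introl E) Haut); lia.
- exact: (oe_main hm hn E Haut).
- apply: (os_main hm hn (or_intror E) Haut); lia.
Qed.
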